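(* Assume $f$ has a unique global maximizer $g$ and the problem contains no weak epistasis. Let $S\subseteq V$ and let $R$ be any assignment with $\mathcal C(R)=V\setminus\big(S\cup\mathcal{IN}(S)\cup\mathcal{IN}^2(S)\big)$. If $\big|\Psi_{\{(\mathcal{IN}(S)\setminus S,\,g)\}\cup R}[s]\big|=1$ for all $s\in S$, then $\psi_s=g[s]$ for all $s\in S$ and all $\psi\in\Psi_{\{(\mathcal{IN}(S)\setminus S,\,g)\}\cup R}$.
   Context: Fix $\ell\ge1$, loci $V=\{0,\dots,\ell-1\}$, chromosomes $\vec y\in\{0,1\}^V$, fitness $f:\{0,1\}^V\to\mathbb R$ (maximized) with unique global maximizer $g$. An assignment $A$ is a set of pairs $(v,a)$ ($v\in V$, $a\in\{0,1\}$) with at most one pair per locus; $A[v]=a$ if $(v,a)\in A$, else $A[v]=*$; coverage $\mathcal C(A)=\{v:A[v]\ne*\}$; for $T\subseteq V$, $\{(T,g)\}=\{(t,g[t]):t\in T\}$. $\Psi_A$ (constrained optima) is the set of chromosomes agreeing with $A$ on $\mathcal C(A)$ with maximum fitness among such chromosomes; $\Psi_A[v]=\{\psi_v:\psi\in\Psi_A\}$. Epistasis: for $v\in V$ and nonempty $S\subseteq V\setminus\{v\}$, $S\Rightarrow v$ iff for every $s\in S$ there exists an assignment $A$ with $\mathcal C(A)=S$ and $\Psi_A[v]\neq\Psi_{A\setminus\{(s,A[s])\}}[v]$; the empty set is never epistatic. An epistasis $S\Rightarrow v$ with $|S|\ge2$ is weak if no nonempty proper subset $T\subsetneq S$ has $T\Rightarrow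 v$; ''no weak epistasis'' means no epistasis is weak. $\mathcal{IN}(v)=\{u:\{u\}\Rightarrow v\}$, $\mathcal{IN}^2(v)=\{u:\exists w\in\mathcal{IN}(v),\ \{u\}\Rightarrow w\}$, and for $S\subseteq V$, $\mathcal{IN}(S)=\bigcup_{v\in S}\mathcal{IN}(v)$, $\mathcal{IN}^2(S)=\bigcup_{v\in S}\mathcal{IN}^2(v)$. *)

(* Defs.v *)
From mathcomp Require Import all_boot all_order all_algebra.
Set Implicit Arguments. Unset Strict Implicit. Unset Printing Implicit Defensive.
Import Order.TTheory GRing.Theory Num.Theory.
Local Open Scope ring_scope.

Definition chrom (l : nat) := {ffun 'I_l -> bool}.

(* An assignment: at most one value per locus; None encodes "*". *)
Definition asgn (l : nat) := {ffun 'I_l -> option bool}.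

Definition acover (l : nat) (A : asgn l) : {set 'I_l} :=
  [set v | A v != None].

Definition agrees (l : nat) (A : asgn l) (y : chrom l) : bool :=
  [forall v, if A v is Some a then y v == a else true].

Definition Psi (R : realDomainType) (l : nat) (f : chrom l -> R) (A : asgn l)
  : {set chrom l} :=
  [set x | agrees A x && [forall y, agrees A y ==> (f y <= f x)]].

Definition PsiAt (R : realDomainType) (l : nat) (f : chrom l -> R) (A : asgn l)
  (v : 'I_l) : {set bool} :=
  [set (x : chrom l) v | x in Psi f A].

Definition aremove (l : nat) (A : asgn l) (s : 'I_l) : asgn l :=
  [ffun v => if v == s then None else A v].

Definition asgn_of (l : nat) (T : {set 'I_l}) (g : chrom l) : asgn l :=
  [ffun v => if v \in T then Some (g v) else None].

(* union of assignments (used only for assignments with disjoint coverage) *)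
Definition aunion (l : nat) (A B : asgn l) : asgn l :=
  [ffun v => if A v is Some a then Some a else B v].

Definition epistatic (R : realDomainType) (l : nat) (f : chrom l -> R)
  (S : {set 'I_l}) (v : 'I_l) : bool :=
  [&& v \notin S, S != set0 &
  [forall s in S, exists A : asgn l,
    (acover A == S) && (PsiAt f A v != PsiAt f (aremove A s) v)]].

Definition weak_epistasis (R : realDomainType) (l : nat) (f : chrom l -> R)
  (S : {set 'I_l}) (v : 'I_l) : Prop :=
  epistatic f S v /\ (2 <= #|S|)%N /\
  ~ (exists T : {set 'I_l}, T != set0 /\ T \proper S /\ epistatic f T v).

Definition no_weak_epistasis (R : realDomainType) (l : nat) (f : chrom l -> R)
  : Prop := forall S v, ~ weak_epistasis f S v.

Definition unique_max (R : realDomainType) (l : nat) (f : chrom l -> R)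
  (g : chrom l) : Prop := forall x, x != g -> f x < f g.

Definition IN1 (R : realDomainType) (l : nat) (f : chrom l -> R) (v : 'I_l)
  : {set 'I_l} := [set u | epistatic f [set u] v].
Definition IN2 (R : realDomainType) (l : nat) (f : chrom l -> R) (v : 'I_l)
  : {set 'I_l} := [set u | [exists w in IN1 f v, epistatic f [set u] w]].
Definition INs (R : realDomainType) (l : nat) (f : chrom l -> R) (S : {set 'I_l})
  : {set 'I_l} := \bigcup_(v in S) IN1 f v.
Definition IN2s (R : realDomainType) (l : nat) (f : chrom l -> R) (S : {set 'I_l})
  : {set 'I_l} := \bigcup_(v in S) IN2 f v.

(* Main.v *)
Require Import Defs.
From mathcomp Require Import all_boot all_order all_algebra.
Set Implicit Arguments. Unset Strict Implicit. Unset Printing Implicit Defensive.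
Import Order.TTheory GRing.Theory Num.Theory.

Section S.
Variables (R : realDomainType) (l : nat) (f : chrom l -> R).
Local Open Scope ring_scope.

Lemma in_Psi (A : asgn l) x :
  (x \in Psi f A) = agrees A x && [forall y, agrees A y ==> (f y <= f x)].
Proof. by rewrite inE. Qed.

Lemma psi_sub (B B' : asgn l) psi :
  (forall y, agrees B y -> agrees B' y) -> psi \in Psi f B' -> agrees B psi ->
  (psi \in Psi f B) /\ (forall x, x \in Psi f B -> x \in Psi f B').
Proof.
move=> hBB; rewrite in_Psi => /andP[a' /forallP m'] aB; split.
  rewrite in_Psi aB /=; apply/forallP => y; apply/implyP => ay.
  exact: (implyP (m' y) (hBB _ ay)).
move=> x; rewrite in_Psi => /andP[ax /forallP mx].
rewrite in_Psi (hBB _ ax) /=; apply/forallP => y; apply/implyP => ay.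
apply: le_trans (implyP (m' y) ay) _.
exact: (implyP (mx psi) aB).
Qed.

Lemma chain (T : {set 'I_l}) v :
  no_weak_epistasis f -> epistatic f T v -> exists2 u, u \in T & epistatic f [set u] v.
Proof.
move=> nw; move: {2}#|T| (leqnn #|T|) => n; elim: n T => [|n IH] T hn ep.
  move: ep => /and3P[_ /eqP hT _]; exfalso; apply: hT.
  by apply/eqP; rewrite -cards_eq0 -leqn0.
case: (leqP 2 #|T|) => h2.
  have [/existsP[T' /and3P[T'0 pT' eT']] | nE] :=
    boolP [exists T' : {set 'I_l}, [&& T' != set0, T' \proper T & epistatic f T' v]].
    have [u uT' eu] := IH T' (leq_trans (proper_card pT') hn) eT'.
    by exists u => //; exact: (subsetP (proper_sub pT')).
  exfalso; apply: (nw T v); split=> //; split=> // [[T' [a [b c]]]].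
  by move/negP: nE; apply; apply/existsP; exists T'; rewrite a b c.
have /and3P[_ T0 _] := ep.
have : #|T| = 1%N.
  apply/eqP; rewrite eqn_leq -ltnS h2 /= lt0n cards_eq0; exact: T0.
move/eqP/cards1P=> [u Tu]; exists u; first by rewrite Tu set11.
by rewrite -Tu.
Qed.

Definition restr (B : asgn l) (T : {set 'I_l}) : asgn l :=
  [ffun v => if v \in T then B v else None].

Lemma acover_restr (B : asgn l) (T : {set 'I_l}) : T \subset acover B -> acover (restr B T) = T.
Proof.
move=> sT; apply/setP => v; rewrite !inE ffunE.
case vT: (v \in T) => //.
by have := subsetP sT v vT; rewrite inE.
Qed.

Lemma aremove_restr (B : asgn l) (T : {set 'I_l}) t : aremove (restr B T) t = restr B (T :\ t).
Proof.
by apply/ffunP => v; rewrite !ffunE !inE; case: (v == t).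
Qed.

Lemma psi_g (g : chrom l) (B : asgn l) v :
  unique_max f g -> agrees B g -> PsiAt f B v = [set g v].
Proof.
move=> um ag; rewrite /PsiAt.
have -> : Psi f B = [set g].
  apply/setP => x; rewrite in_Psi inE.
  apply/andP/eqP => [[ax /forallP m] | ->].
    apply/eqP; apply/negPn/negP => xg.
    have := um x xg; have := implyP (m g) ag.
    by move=> h1 h2; move: (lt_le_trans h2 h1); rewrite ltxx.
  split=> //; apply/forallP => y; apply/implyP => _.
  case: (eqVneq y g) => [->|yg]; first exact: lexx.
  exact: ltW (um y yg).
by rewrite imset_set1.
Qed.

Section Main.
Variables (g : chrom l) (S : {set 'I_l}) (Ra : asgn l).
Hypothesis um : unique_max f g.
Hypothesis nw : no_weak_epistasis f.
Hypothesis hcov : acover Ra = ~: (S :|: INs f S :|: IN2s f S).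

Let G := INs f S :\: S.
Let A := aunion (asgn_of G g) Ra.

Lemma A_cov u : u \in acover A -> u \in S :|: INs f S :|: IN2s f S -> u \in G.
Proof.
rewrite inE /A ffunE ffunE.
case uG: (u \in G) => // hR hu; exfalso.
have : u \in acover Ra by rewrite inE.
by rewrite hcov inE hu.
Qed.

Lemma A_G u : u \in G -> A u = Some (g u).
Proof. by move=> uG; rewrite /A ffunE ffunE uG. Qed.

Lemma A_S s : s \in S -> s \notin acover A.
Proof.
move=> sS; apply/negP => h.
by have := A_cov h; rewrite /G !inE sS /= => /(_ isT).
Qed.

Lemma key n : forall T : {set 'I_l}, (#|T| <= n)%N -> T \subset acover A ->
  forall v, v \in S :|: G -> v \notin T -> PsiAt f (restr A T) v = [set g v].
Proof.
elim: n => [|n IH] T hn sT v hv vT.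
  have -> : T = set0 by apply/eqP; rewrite -cards_eq0 -leqn0.
  apply: psi_g => //; apply/forallP => w; by rewrite ffunE inE.
case: (boolP (PsiAt f (restr A T) v == [set g v])) => [/eqP //| hne].
exfalso.
case: (boolP (T == set0)) => [/eqP T0 | T0].
  move/negP: hne; apply; apply/eqP; apply: psi_g => //.
  by apply/forallP => w; rewrite ffunE T0 inE.
have IHT t : t \in T -> forall w, w \in S :|: G -> w \notin T :\ t ->
    PsiAt f (restr A (T :\ t)) w = [set g w].
  move=> tT w hw wT; apply: IH => //.
    by have := cardsD1 t T; rewrite tT add1n => e; rewrite -ltnS -e.
  exact: subset_trans (subsetDl _ _) sT.
have ep : epistatic f T v.
  rewrite /epistatic vT T0 /=; apply/forallP => t; apply/implyP => tT.
  apply/existsP; exists (restr A T); rewrite acover_restr // eqxx /=.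
  rewrite aremove_restr IHT //; last by rewrite !inE negb_and vT orbT.
have [u uT eu] := chain nw ep.
have uIN : u \in IN1 f v by rewrite inE.
have uG : u \in G.
  apply: A_cov; first exact: subsetP sT u uT.
  move: hv; rewrite !inE => /orP[vS | /andP[_ vIN]].
    by apply/orP; left; apply/orP; right; apply/bigcupP; exists v.
  apply/orP; right.
  move/bigcupP: vIN => [s0 s0S vs0].
  apply/bigcupP; exists s0 => //; rewrite inE; apply/existsP; exists v.
  by rewrite vs0.
have uSG : u \in S :|: G by rewrite inE uG orbT.
have := IHT u uT u uSG; rewrite !inE eqxx /= => /(_ isT) hu.
have : g u \in PsiAt f (restr A (T :\ u)) u by rewrite hu set11.
move/imsetP => [psi psiIn gu].
have hBB : forall y, agrees (restr A T) y -> agrees (restr A (T :\ u)) y.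
  move=> y /forallP h; apply/forallP => w; have := h w.
  rewrite !ffunE !inE; case: (w == u); case: (w \in T) => //.
have apsi : agrees (restr A T) psi.
  apply/forallP => w; move: psiIn; rewrite in_Psi => /andP[/forallP ag _].
  have := ag w; rewrite !ffunE !inE.
  case: (eqVneq w u) => [->|_] /=; last by [].
  rewrite uT; move: uG; rewrite /G inE => -> /=; by rewrite gu.
have [psiB subB] := psi_sub hBB psiIn apsi.
have hv' := IHT u uT v hv; rewrite !inE negb_and vT orbT in hv'.
move/negP: hne; apply; apply/eqP/setP => b; rewrite inE.
apply/imsetP/eqP => [[x xP ->] | ->].
  have : x v \in PsiAt f (restr A (T :\ u)) v by apply: imset_f; exact: subB.
  by rewrite (hv' isT) inE => /eqP.
exists psi => //.
have : psi v \in PsiAt f (restr A (T :\ u)) v by apply: imset_f.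
by rewrite (hv' isT) inE => /eqP.
Qed.

Lemma restr_full : restr A (acover A) = A.
Proof.
apply/ffunP => v; rewrite ffunE inE.
by case E: (A v).
Qed.

End Main.
End S.

Local Open Scope ring_scope.

Theorem corollary2 (R : realDomainType) (l : nat) (f : chrom l -> R)
  (g : chrom l) (S : {set 'I_l}) (Ra : asgn l) :
  (0 < l)%N ->
  unique_max f g ->
  no_weak_epistasis f ->
  acover Ra = ~: (S :|: INs f S :|: IN2s f S) ->
  (forall s, s \in S ->
     #|PsiAt f (aunion (asgn_of (INs f S :\: S) g) Ra) s| = 1%N) ->
  forall s, s \in S ->
  forall psi, psi \in Psi f (aunion (asgn_of (INs f S :\: S) g) Ra) ->
    psi s = g s.
Proof.
move=> _ um nw hcov _ s sS psi psiIn.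
set A := aunion (asgn_of (INs f S :\: S) g) Ra.
have := @key R l f g S Ra um nw hcov #|acover A| (acover A) (leqnn _) (subxx _) s.
rewrite inE sS => /(_ isT (@A_S R l f g S Ra hcov s sS)).
rewrite restr_full => h.
have : psi s \in PsiAt f (aunion (asgn_of (INs f S :\: S) g) Ra) s by apply: imset_f.
by rewrite h inE => /eqP.
Qed.
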